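(* Let $n\ge2$, let $\mathbf{x}=(x_1,\dots,x_n)^T\in\mathbb{C}^n$ with $x_i\neq x_j$ for all $i\neq j$, and let $F$, $p$, $F''$ be as in the context. Let $\mathbf{y}$ be the result of one step of the Chebyshev method for $F$ starting from $\mathbf{x}$, i.e. \[ \mathbf{y}=\mathbf{x}-F'(\mathbf{x})^{-1}\Big(F(\mathbf{x})+\tfrac12\,F''(\mathbf{x})\big(F'(\mathbf{x})^{-1}F(\mathbf{x}),\,F'(\mathbf{x})^{-1}F(\mathbf{x})\big)\Big). \] With $W_l=\dfrac{p(x_l)}{\prod_{j=1,\,j\neq l}^n(x_l-x_j)}$ for $l=1,\dots,n$, one has for every $j=1,\dots,n$ \[ y_j=x_j-W_j\Big(1+\sum_{\nu=1,\,\nu\neq j}^n\frac{W_\nu}{x_\nu-x_j}\Big). \] Equivalently, with $B^{(l)}(t)=-\prod_{i=1,\,i\neq l}^n(t-x_i)$, \[ y_j=x_j-\frac{p(x_j)}{B^{(j)}(x_j)}\Big(\sum_{\nu=1,\,\nu\neq j}^n\frac{p(x_\nu)}{(x_\nu-x_j)\,B^{(\nu)}(x_\nu)}-1\Big). \]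
   Context: Let $p(t)=t^n+a_{n-1}t^{n-1}+\dots+a_1t+a_0$ be a monic polynomial of degree $n$ with real coefficients, and set $\mathbf{a}=(a_0,a_1,\dots,a_{n-1})^T$. Define $V=(v_1,\dots,v_n)^T:\mathbb{C}^n\to\mathbb{C}^n$ by \[ v_{n-\nu+1}(\mathbf{x})=\sum_{i_1<i_2<\dots<i_\nu}(-x_{i_1})(-x_{i_2})\cdots(-x_{i_\nu}),\qquad \nu=1,\dots,n, \] (the sum running over all $\nu$-element index sets $\{i_1<\dots<i_\nu\}\subseteq\{1,\dots,n\}$), so that $\prod_{j=1}^n(t-x_j)=t^n+\sum_{j=0}^{n-1}v_{j+1}(\mathbf{x})t^j$. Define $F=(f_1,\dots,f_n)^T:\mathbb{C}^n\to\mathbb{C}^n$ by $F(\mathbf{x})=V(\mathbf{x})-\mathbf{a}$, with Jacobian $F'(\mathbf{x})$ (invertible when the $x_i$ are pairwise distinct). For $k=1,\dots,n$, $A^{(k)}(\mathbf{x})\in\mathbb{C}^{n\times n}$ is the matrix whose $(i,l)$ entry is $\partial^2 f_i(\mathbf{x})/\partial x_l\partial x_k$, and the second derivative is the bilinear map $F''(\mathbf{x})(\mathbf{y},\mathbf{z})=\sum_{k=1}^n z_k\,A^{(k)}(\mathbf{x})\,\mathbf{y}$ for $\mathbf{y},\mathbf{z}\in\mathbb{C}^n$, i.e. $F''(\mathbf{x})(\mathbf{y},\mathbf{z})_i=\sum_{k,l}\frac{\partial^2 f_i(\mathbf{x})}{\partial x_l\partial x_k}y_l z_k$. *)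

(* Defs.v *)
From HB Require Import structures.
From mathcomp Require Import all_boot all_order all_algebra.
From mathcomp Require Import mpoly.
From mathcomp Require Import complex.
From mathcomp Require Import reals.
Set Implicit Arguments. Unset Strict Implicit. Unset Printing Implicit Defensive.
Import Order.TTheory GRing.Theory Num.Theory.
Local Open Scope ring_scope.

Section Cheb.
Variables (R : realType) (n : nat).
Local Notation C := (R[i]).

(* V as a polynomial map; 0-based component k corresponds to v_{k+1};
   v_{n-nu+1} = sum over nu-subsets of prod (-x_i), i.e. nu = n - k. *)
Definition Vpoly (k : 'I_n) : {mpoly C[n]} :=
  \sum_(S : {set 'I_n} | #|S| == (n - k)%N) \prod_(i in S) (- 'X_i).

Definition Fpoly (a : 'I_n -> R) (k : 'I_n) : {mpoly C[n]} :=
  Vpoly k - ((a k)%:C)%C%:MP.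

Definition Fval (a : 'I_n -> R) (x : 'I_n -> C) : 'cV[C]_n :=
  \col_k (Fpoly a k).@[x].

Definition Fjac (a : 'I_n -> R) (x : 'I_n -> C) : 'M[C]_n :=
  \matrix_(i, l) (mderiv l (Fpoly a i)).@[x].

Definition Ahess (a : 'I_n -> R) (x : 'I_n -> C) (k : 'I_n) : 'M[C]_n :=
  \matrix_(i, l) (mderiv l (mderiv k (Fpoly a i))).@[x].

Definition F2 (a : 'I_n -> R) (x : 'I_n -> C) (y z : 'cV[C]_n) : 'cV[C]_n :=
  \sum_k z k 0 *: (Ahess a x k *m y).

Definition cheb_step (a : 'I_n -> R) (x : 'I_n -> C) : 'cV[C]_n :=
  let Ji := invmx (Fjac a x) in
  let d := Ji *m Fval a x in
  (\col_k x k) - Ji *m (Fval a x + 2^-1 *: F2 a x d d).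

Definition ppoly (a : 'I_n -> R) : {poly C} :=
  'X^n + \sum_(i < n) ((a i)%:C)%C *: 'X^i.

Definition Weier (a : 'I_n -> R) (x : 'I_n -> C) (l : 'I_n) : C :=
  (ppoly a).[x l] / \prod_(j < n | j != l) (x l - x j).

Definition Bpoly (x : 'I_n -> C) (l : 'I_n) : {poly C} :=
  - \prod_(i < n | i != l) ('X - (x i)%:P).

End Cheb.

(* Main.v *)
Require Import Defs.
From HB Require Import structures.
From mathcomp Require Import all_boot all_order all_algebra.
From mathcomp Require Import mpoly.
From mathcomp Require Import complex.
From mathcomp Require Import reals.
From mathcomp Require Import zify ring.
Import Order.TTheory GRing.Theory Num.Theory.
Local Open Scope ring_scope.
Set Implicit Arguments. Unset Strict Implicit. Unset Printing Implicit Defensive.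

Section H.
Variables (R : realType) (n : nat).
Local Notation C := (R[i]).
Lemma dXU (i l : 'I_n) :
  mderiv l ('X_i : {mpoly C[n]}) = if i == l then 1 else 0.
Proof.
rewrite mderivX mnm1E; case: eqP => [->|_].
  by rewrite -[X in (X - _)%MM]add0m addmK mpolyX0 scale1r.
by rewrite scale0r.
Qed.

Lemma deriv_const_prod (P : pred 'I_n) (c : C) l : ~~ P l ->
  mderiv l (\prod_(i | P i) (c%:MP - 'X_i)) = 0.
Proof.
move=> Pl; apply: (big_ind (fun p : {mpoly C[n]} => mderiv l p = 0)).
- by rewrite -mpolyC1 mderivC.
- by move=> p q hp hq; rewrite mderivM hp hq mul0r mulr0 addr0.
- move=> i Pi; rewrite mderivB mderivC dXU; case: eqP => [e|_]; last by rewrite subr0.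
  by move: Pl; rewrite -e Pi.
Qed.

Lemma deriv_prod (P : pred 'I_n) (c : C) l :
  mderiv l (\prod_(i | P i) (c%:MP - 'X_i)) =
  if P l then - \prod_(i | P i && (i != l)) (c%:MP - 'X_i) else 0.
Proof.
case: ifP => Pl; last by apply: deriv_const_prod; rewrite Pl.
rewrite (bigD1 l) //= mderivM deriv_const_prod ?eqxx ?andbF // mulr0 addr0.
by rewrite mderivB mderivC dXU eqxx sub0r mulN1r.
Qed.
Lemma inord_card (J : {set 'I_n}) (k : 'I_n.+1) :
  (inord (n - #|J|) == k :> 'I_n.+1) = (#|J| == n - k)%N.
Proof.
have hJ : (#|J| <= n)%N by rewrite -[X in (_ <= X)%N](card_ord n) max_card.
have hk : (k <= n)%N by rewrite -ltnS.
rewrite -val_eqE /= inordK ?ltnS ?leq_subr //.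
by apply/eqP/eqP => [<-|->]; rewrite subKn.
Qed.

Lemma vieta (c : C) :
  \sum_(k < n) c ^+ k *: Vpoly R k = \prod_(i < n) (c%:MP - 'X_i) - (c ^+ n)%:MP.
Proof.
have -> : \prod_(i < n) (c%:MP - 'X_i) =
   \prod_(i < n) ((- 'X_i : {mpoly C[n]}) + c%:MP).
  by apply: eq_bigr => i _; rewrite addrC.
rewrite bigA_distr.
have step : forall J : {set 'I_n},
   \prod_(i < n) (if i \in J then (- 'X_i : {mpoly C[n]}) else c%:MP) =
   (c ^+ (n - #|J|)) *: \prod_(i in J) (- 'X_i).
  move=> J; rewrite (bigID (fun i => i \in J)) /=.
  rewrite [X in _ * X](eq_bigr (fun _ => c%:MP)); last by move=> i /negbTE ->.
  rewrite [X in X * _](eq_bigr (fun i => - 'X_i)); last by move=> i ->.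
  rewrite prodr_const mulrC -rmorphXn mul_mpolyC; congr (_ ^+ _ *: _).
  have h := cardC J; rewrite card_ord in h.
  transitivity (#|J| + #|[predC J]| - #|J|)%N; last by rewrite h.
  by rewrite addKn; apply: eq_card => i; rewrite !inE.
rewrite (eq_bigr _ (fun J _ => step J)).
rewrite (partition_big (fun J : {set 'I_n} => inord (n - #|J|) : 'I_n.+1) xpredT) //=.
rewrite big_ord_recr /=.
rewrite (eq_bigl (pred1 set0)); last first.
  by move=> J; rewrite inord_card /= subnn cards_eq0.
rewrite big_pred1_eq big_set0 cards0 subn0 -mul_mpolyC mulr1 addrK.
apply: eq_bigr => k _; rewrite /Vpoly scaler_sumr; apply: eq_big => [J|J].
  by rewrite inord_card.
move=> /eqP hJ; rewrite hJ subKn //; exact: ltnW.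
Qed.

Variable (x : 'I_n -> C).

Lemma ev_prod (P : pred 'I_n) (c : C) :
  (\prod_(i | P i) (c%:MP - 'X_i) : {mpoly C[n]}).@[x] = \prod_(i | P i) (c - x i).
Proof.
rewrite rmorph_prod; apply: eq_bigr => i _.
by rewrite rmorphB /= mevalC mevalXU.
Qed.

Lemma E0 (c : C) :
  \sum_(k < n) c ^+ k * (Vpoly R k).@[x] = \prod_(i < n) (c - x i) - c ^+ n.
Proof.
have := congr1 (meval x) (vieta c).
rewrite raddf_sum mevalB mevalC ev_prod => <-.
by apply: eq_bigr => k _; rewrite /= mevalZ.
Qed.

Lemma E1 (c : C) l :
  \sum_(k < n) c ^+ k * (mderiv l (Vpoly R k)).@[x] = - \prod_(i | i != l) (c - x i).
Proof.
have := congr1 (fun p => (mderiv l p).@[x]) (vieta c).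
rewrite /= mderivB mderivC subr0 (deriv_prod xpredT) /= (raddf_sum (mderiv l)) (raddf_sum (meval x)).
rewrite mevalN ev_prod => <-.
by apply: eq_bigr => k _; rewrite /= mderivZ mevalZ.
Qed.

Lemma E2 (c : C) l m :
  \sum_(k < n) c ^+ k * (mderiv l (mderiv m (Vpoly R k))).@[x] =
  if l == m then 0 else \prod_(i | (i != m) && (i != l)) (c - x i).
Proof.
have := congr1 (fun p => (mderiv l (mderiv m p)).@[x]) (vieta c).
rewrite /= !mderivB !mderivC subr0 (deriv_prod xpredT) /= mderivN.
rewrite (deriv_prod (fun i => i != m)) (raddf_sum (mderiv m)) (raddf_sum (mderiv l)) (raddf_sum (meval x)) => h.
rewrite (eq_bigr (fun k : 'I_n => (mderiv l (mderiv m (c ^+ k *: Vpoly R k))).@[x])).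
  rewrite h; case: (eqVneq l m) => [->|hlm] /=; first by rewrite oppr0 meval0.
  by rewrite opprK ev_prod.
by move=> k _; rewrite /= !mderivZ mevalZ.
Qed.

End H.

Section Main.
Variables (R : realType) (n : nat) (a : 'I_n -> R) (x : 'I_n -> R[i]).
Local Notation C := (R[i]).
Hypothesis hx : forall i j : 'I_n, i != j -> x i != x j.

Let Emx : 'M[C]_n := \matrix_(j, k) x j ^+ k.
Let Dv (j : 'I_n) : C := (Bpoly x j).[x j].
Let Pj (j : 'I_n) : C := \prod_(i | i != j) (x j - x i).

Lemma Dv_eq j : Dv j = - Pj j.
Proof.
rewrite /Dv /Bpoly hornerN horner_prod; congr (- _).
by apply: eq_bigr => i _; rewrite hornerXsubC.
Qed.

Lemma Pj_neq0 j : Pj j != 0.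
Proof.
apply/prodf_neq0 => i hij; rewrite subr_eq0; apply: hx; by rewrite eq_sym.
Qed.

Lemma Dv_neq0 j : Dv j != 0.
Proof. by rewrite Dv_eq oppr_eq0 Pj_neq0. Qed.

Lemma prod_zero j (P : pred 'I_n) : P j -> \prod_(i | P i) (x j - x i) = 0.
Proof. by move=> Pj0; rewrite (bigD1 j) //= subrr mul0r. Qed.

Lemma EJ : Emx *m Fjac a x = diag_mx (\row_j Dv j).
Proof.
apply/matrixP => j l; rewrite !mxE.
rewrite (eq_bigr (fun k : 'I_n => x j ^+ k * (mderiv l (Vpoly R k)).@[x])); last first.
  by move=> k _; rewrite !mxE /Fpoly mderivB mderivC subr0.
rewrite E1; case: (eqVneq j l) => [->|hjl] /=.
  by rewrite mulr1n Dv_eq.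
by rewrite mulr0n prod_zero ?oppr0.
Qed.

Lemma J_unit : Fjac a x \in unitmx.
Proof.
rewrite unitmxE unitfE; apply/negP => /eqP h0.
have := congr1 determinant EJ; rewrite det_mulmx h0 mulr0 det_diag => /esym/eqP.
by apply/negP/prodf_neq0 => i _; rewrite mxE Dv_neq0.
Qed.

Lemma Ji_col (v : 'cV[C]_n) j :
  (invmx (Fjac a x) *m v) j 0 = (Emx *m v) j 0 / Dv j.
Proof.
have hE : Emx = diag_mx (\row_j Dv j) *m invmx (Fjac a x).
  by rewrite -EJ mulmxK // J_unit.
rewrite hE -mulmxA mul_diag_mx !mxE mulrC mulKf //; exact: Dv_neq0.
Qed.

Lemma EF j : (Emx *m Fval a x) j 0 = - (ppoly a).[x j].
Proof.
rewrite !mxE.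
rewrite (eq_bigr (fun k : 'I_n => x j ^+ k * (Vpoly R k).@[x] - x j ^+ k * ((a k)%:C)%C)); last first.
  by move=> k _; rewrite !mxE /Fpoly mevalB mevalC mulrBr.
rewrite sumrB E0 (bigD1 j) //= subrr mul0r sub0r.
rewrite /ppoly hornerD hornerXn horner_sum opprD; congr (_ - _).
by apply: eq_bigr => k _; rewrite hornerZ hornerXn mulrC.
Qed.

Lemma d_eq j : (invmx (Fjac a x) *m Fval a x) j 0 = Weier a x j.
Proof.
by rewrite Ji_col EF Dv_eq /Weier invrN mulrNN.
Qed.

Definition Hf (j l m : 'I_n) : C :=
  if l == m then 0 else \prod_(i | (i != m) && (i != l)) (x j - x i).

Lemma EF2 j (d : 'cV[C]_n) :
  (Emx *m F2 a x d d) j 0 =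
  \sum_m \sum_l d m 0 * d l 0 * Hf j l m.
Proof.
rewrite !mxE.
transitivity (\sum_(k < n) \sum_(m < n) \sum_(l < n)
   x j ^+ k * (d m 0 * (d l 0 * (mderiv l (mderiv m (Vpoly R k))).@[x]))).
  apply: eq_bigr => k _; rewrite !mxE summxE big_distrr; apply: eq_bigr => m _.
  rewrite !mxE big_distrr /= big_distrr; apply: eq_bigr => l _ /=.
  rewrite !mxE /Fpoly !mderivB !mderivC !subr0; ring.
rewrite exchange_big; apply: eq_bigr => m _.
rewrite exchange_big; apply: eq_bigr => l _.
rewrite /Hf -E2 big_distrr; apply: eq_bigr => k _ /=; ring.
Qed.


Lemma prod_split j m : m != j ->
  \prod_(i | (i != j) && (i != m)) (x j - x i) = Pj j / (x j - x m).
Proof.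
move=> hmj; have hne : x j - x m != 0 by rewrite subr_eq0 hx // eq_sym.
by rewrite /Pj [in RHS](bigD1 m) //= mulrC mulKf.
Qed.

Lemma Hf_jj j : Hf j j j = 0.
Proof. by rewrite /Hf eqxx. Qed.

Lemma Hf_lj j l : l != j -> Hf j l j = Pj j / (x j - x l).
Proof. by move=> hl; rewrite /Hf (negbTE hl) prod_split. Qed.

Lemma Hf_jm j m : m != j -> Hf j j m = Pj j / (x j - x m).
Proof.
move=> hm; rewrite /Hf eq_sym (negbTE hm) -prod_split //.
by apply: eq_bigl => i; rewrite andbC.
Qed.

Lemma Hf_other j l m : l != j -> m != j -> Hf j l m = 0.
Proof.
move=> hl hm; rewrite /Hf; case: eqP => // _.
by rewrite prod_zero // eq_sym hm eq_sym hl.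
Qed.

Lemma dbl (W : 'I_n -> C) j :
  \sum_m \sum_l W m * W l * Hf j l m =
  2 * W j * \sum_(m | m != j) W m * (Pj j / (x j - x m)).
Proof.
rewrite (bigD1 j) //= (bigD1 j) //= Hf_jj mulr0 add0r.
have h1 : \sum_(l | l != j) W j * W l * Hf j l j =
    W j * \sum_(m | m != j) W m * (Pj j / (x j - x m)).
  by rewrite big_distrr; apply: eq_bigr => l hl /=; rewrite Hf_lj // !mulrA.
have h2 : \sum_(m | m != j) \sum_l W m * W l * Hf j l m =
    W j * \sum_(m | m != j) W m * (Pj j / (x j - x m)).
  rewrite big_distrr; apply: eq_bigr => m hm /=.
  rewrite (bigD1 j) //= Hf_jm // big1 ?addr0; first by rewrite !mulrA [W m * W j]mulrC.
  by move=> l hl; rewrite Hf_other // mulr0.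
by rewrite h1 h2 -mulrA mulr_natl mulr2n.
Qed.

Lemma main_eq j :
  cheb_step a x j 0 =
      x j - Weier a x j *
            (1 + \sum_(nu < n | nu != j) Weier a x nu / (x nu - x j)).
Proof.
rewrite /cheb_step mxE [(\col_k _) j 0]mxE.
set d := invmx (Fjac a x) *m Fval a x.
rewrite mxE Ji_col mulmxDr [X in X / Dv j]mxE -scalemxAr [X in (_ + X) / _]mxE EF EF2 (dbl (fun m => d m 0)) Dv_eq.
rewrite /d d_eq.
set T := \sum_(nu < n | nu != j) Weier a x nu / (x nu - x j).
have hS : \sum_(m < n | m != j) (invmx (Fjac a x) *m Fval a x) m 0 * (Pj j / (x j - x m))
     = - (Pj j * T).
  rewrite /T mulr_sumr -sumrN; apply: eq_bigr => m hm.
  rewrite d_eq -opprB invrN.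
  have : x m - x j != 0 by rewrite subr_eq0 hx.
  move: (Weier a x m) (x m - x j) => w e he.
  by rewrite !mulrN mulrCA.
rewrite hS.
have hp : (ppoly a).[x j] = Weier a x j * Pj j by rewrite /Weier mulfVK ?Pj_neq0.
rewrite hp.
have := Pj_neq0 j.
move: (Weier a x j) (Pj j) => w P hP.
by field.
Qed.

End Main.

Unset Implicit Arguments.
Set Strict Implicit.
Theorem mainTheorem7 (R : realType) (n : nat) (a : 'I_n -> R)
    (x : 'I_n -> R[i]) :
  (2 <= n)%N ->
  (forall i j : 'I_n, i != j -> x i != x j) ->
  forall j : 'I_n,
    cheb_step a x j 0 =
      x j - Weier a x j *
            (1 + \sum_(nu < n | nu != j) Weier a x nu / (x nu - x j))
    /\
    cheb_step a x j 0 =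
      x j - (ppoly a).[x j] / (Bpoly x j).[x j] *
            (\sum_(nu < n | nu != j)
                (ppoly a).[x nu] / ((x nu - x j) * (Bpoly x nu).[x nu]) - 1).
Proof.
move=> _ hx j; have h := main_eq a hx j; split => //.
rewrite h; congr (_ - _).
have e1 : forall nu : 'I_n, nu != j ->
   (ppoly a).[x nu] / ((x nu - x j) * (Bpoly x nu).[x nu]) =
   - (Weier a x nu / (x nu - x j)).
  move=> nu hnu; rewrite Dv_eq /Weier.
  by rewrite mulrN invrN mulrN invfM mulrA mulrAC.
rewrite (eq_bigr _ e1) sumrN Dv_eq /Weier.
by rewrite invrN mulrN mulNr -opprD mulrN opprK addrC.
Qed.
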